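(* Let $D$ be a friendship digraph of order $n$. Then for each vertex $v\in V(D)$: (a) $d^+(v)=d^-(v)$; and (b) $\sum_{u\in N^+(v)}\bigl(d^-(u)-1\bigr)=n-1$.
   Context: All digraphs are finite and have neither loops nor parallel arcs (a pair of opposite arcs $(u,v)$ and $(v,u)$ is allowed). $N^+(v)$, $N^-(v)$ are the out- and in-neighborhoods of $v$, and $d^+(v)=|N^+(v)|$, $d^-(v)=|N^-(v)|$. A friendship digraph is a nontrivial digraph (at least two vertices) in which any two distinct vertices have exactly one common out-neighbor. *)

(* Defs.v *)
From mathcomp Require Import all_boot.
Set Implicit Arguments. Unset Strict Implicit. Unset Printing Implicit Defensive.

(* Parallel arcs are excluded automatically (a relation); opposite arcs allowed. *)
Definition loopless (T : finType) (e : rel T) : Prop := forall v, ~~ e v v.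

Definition outN (T : finType) (e : rel T) (v : T) : {set T} := [set u | e v u].
Definition inN (T : finType) (e : rel T) (v : T) : {set T} := [set u | e u v].
Definition outdeg (T : finType) (e : rel T) (v : T) : nat := #|outN e v|.
Definition indeg (T : finType) (e : rel T) (v : T) : nat := #|inN e v|.

Definition friendship_digraph (T : finType) (e : rel T) : Prop :=
  [/\ 2 <= #|T|, loopless e &
      forall x y : T, x != y -> #|outN e x :&: outN e y| = 1].

(* Main.v *)
Require Import Defs.
From mathcomp Require Import all_boot.

Lemma card_sum (T : finType) (P : pred T) : #|[set x | P x]| = \sum_x (P x : nat).
Proof.
rewrite -sum1_card big_mkcond /=; apply: eq_bigr => x _; rewrite inE.
by case: (P x).
Qed.

Lemma sum_in_card (T : finType) (A : {set T}) (P : pred T) :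
  \sum_(u in A) (P u : nat) = #|A :&: [set u | P u]|.
Proof.
rewrite card_sum big_mkcond /=; apply: eq_bigr => x _; rewrite !inE.
by case: (x \in A); case: (P x).
Qed.

Lemma in_le_out (T : finType) (e : rel T) :
  friendship_digraph e -> forall v, indeg e v <= outdeg e v.
Proof.
case=> _ Hl Hf v.
pose f x := odflt v [pick u in outN e x :&: outN e v].
have Hfx : forall x, x \in inN e v -> f x \in outN e x :&: outN e v.
  move=> x; rewrite inE => exv.
  have xv : x != v by apply/eqP => E; move: (Hl v); rewrite -{1}E exv.
  rewrite /f; case: pickP => [u //|H].
  have := Hf x v xv; move/eqP; rewrite eq_card0 //.
have inj : {in inN e v &, injective f}.
  move=> x y Hx Hy Exy; apply/eqP; apply: contraT => xy.
  have := Hf x y xy.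
  have Ex := Hfx x Hx; have Ey := Hfx y Hy.
  move: Ex Ey; rewrite -Exy !inE => /andP[ex ev] /andP[ey _].
  have vin : v \in outN e x :&: outN e y.
    by move: Hx Hy; rewrite !inE => -> ->.
  have uin : f x \in outN e x :&: outN e y by rewrite !inE ex ey.
  have uv : f x != v by apply/eqP => E; move: ev; rewrite E (negbTE (Hl v)).
  have : #|[set v; f x]| <= #|outN e x :&: outN e y|.
    apply: subset_leq_card; apply/subsetP => z; rewrite in_set2.
    by case/orP => /eqP ->; [exact: vin| exact: uin].
  by rewrite cards2 eq_sym uv => /[swap] ->.
rewrite /indeg /outdeg -(card_in_imset inj).
apply: subset_leq_card; apply/subsetP => z /imsetP [x Hx ->].
by have := Hfx x Hx; rewrite inE => /andP[_].
Qed.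

Lemma sum_deg (T : finType) (e : rel T) :
  \sum_v indeg e v = \sum_v outdeg e v.
Proof.
rewrite /indeg /outdeg.
under eq_bigr => v _ do rewrite /inN card_sum.
under [RHS]eq_bigr => v _ do rewrite /outN card_sum.
exact: exchange_big.
Qed.

Theorem proposition2p2 (T : finType) (e : rel T) :
  friendship_digraph e ->
  forall v : T,
    outdeg e v = indeg e v /\
    \sum_(u in outN e v) (indeg e u - 1) = #|T| - 1.
Proof.
move=> Hfd v; split.
  apply/eqP; rewrite eq_sym eqn_leq in_le_out //=.
  rewrite leqNgt; apply/negP => Hlt.
  have := @sum_deg T e; rewrite (bigD1 v) //= [in RHS](bigD1 v) //= => E.
  have : indeg e v + \sum_(i | i != v) indeg e i < outdeg e v + \sum_(i | i != v) outdeg e i.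
    rewrite -addSn; apply: leq_add => //; apply: leq_sum => i _; exact: in_le_out.
  by rewrite E ltnn.
case: Hfd => _ Hl Hf.
have step1 : forall u, u \in outN e v ->
  indeg e u - 1 = \sum_x ((x != v) && e x u : nat).
  move=> u Hu; rewrite /indeg (cardsD1 v) -card_sum.
  have -> : v \in inN e u by move: Hu; rewrite !inE.
  rewrite add1n subn1 /=; apply: eq_card => x; by rewrite !inE.
rewrite (eq_bigr _ step1) exchange_big /=.
rewrite (eq_bigr (fun x => (x != v : nat))).
  rewrite -card_sum subn1 -(cardC1 v); apply: eq_card => x; by rewrite inE.
move=> x _; case: eqP => [->|/eqP xv] /=.
  by rewrite big1.
rewrite sum_in_card.
have -> : outN e v :&: [set u | e x u] = outN e x :&: outN e v.
  by apply/setP => u; rewrite !inE andbC.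
exact: Hf.
Qed.
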